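(* Let $n\ge4$. The set $\mathbb{CPI}^n_S$ of closed path independent graphs in $\mathbb G^n_S$ is an $n$-dimensional linear subspace of $\mathbb G^n_S\cong\mathbb R^{\binom n2}$, and $\{\mathbf B^n_j\}_{j=1}^n$ is a basis of it, where $\mathbf B^n_j$ is the vector with $d_{j,k}=1$ for all $k\ne j$ and all other entries $0$.
   Context: $\mathbb G^n_S$ is the space of complete undirected weighted graphs without loops on $V_1,\dots,V_n$ with edge weights $d_{i,j}=d_{j,i}$, identified with $\mathbb R^{\binom n2}$ via the entries $d_{i,j}$, $i<j$. A closed path through a set $D$ ($|D|\ge3$) is a closed path visiting each $V_j$, $j\in D$, exactly once and no other vertex; its length is the sum of its edge weights. A graph is closed path independent iff for every such $D$ all closed paths through $D$ have the same length. *)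

(* Defs.v *)
From HB Require Import structures.
From mathcomp Require Import all_boot all_order all_algebra.
From mathcomp Require Import reals.
Set Implicit Arguments. Unset Strict Implicit. Unset Printing Implicit Defensive.
Import Order.TTheory GRing.Theory Num.Theory.
Local Open Scope ring_scope.

(* Vertices V_1..V_n are 'I_n.  Edges of the complete loopless graph are the
   pairs (i, j) with i < j; there are binom(n,2) of them. *)
Definition edge (n : nat) := {x : 'I_n * 'I_n | (x.1 < x.2)%N}.

Definition graphS (R : realType) (n : nat) := {ffun edge n -> R^o}.

(* weight d_{i,j} = d_{j,i} of the edge between i and j (0 if i = j, unused) *)
Definition wt (R : realType) (n : nat) (d : graphS R n) (i j : 'I_n) : R :=
  if @insub _ (fun x : 'I_n * 'I_n => (x.1 < x.2)%N) (edge n)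
       (if (i < j)%N then (i, j) else (j, i)) is Some e then d e else 0.

(* length of the closed path visiting s_0, s_1, ..., s_{k-1}, s_0 *)
Definition cpath_len (R : realType) (n : nat) (d : graphS R n) (s : seq 'I_n) : R :=
  \sum_(p <- zip s (rot 1 s)) wt d p.1 p.2.

Definition closed_path_through (n : nat) (D : {set 'I_n}) (s : seq 'I_n) :=
  uniq s /\ s =i D.

Definition closed_path_independent (R : realType) (n : nat) (d : graphS R n) :=
  forall D : {set 'I_n}, (3 <= #|D|)%N ->
  forall s t : seq 'I_n, closed_path_through D s -> closed_path_through D t ->
  cpath_len d s = cpath_len d t.

Definition Bvec (R : realType) (n : nat) (j : 'I_n) : graphS R n :=
  [ffun e : edge n => if ((val e).1 == j) || ((val e).2 == j) then 1 else 0].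

(* Main.v *)
Require Import Defs.
From HB Require Import structures.
From mathcomp Require Import all_boot all_order all_algebra.
From mathcomp Require Import reals.
From mathcomp Require Import ring lra zify.
Set Implicit Arguments. Unset Strict Implicit. Unset Printing Implicit Defensive.
Import Order.TTheory GRing.Theory Num.Theory.
Local Open Scope ring_scope.

Section S.
Variables (R : realType) (n : nat).
Implicit Types (d : graphS R n) (i j k l : 'I_n).

Definition pot d (a : 'I_n -> R) := forall e : edge n, d e = a (val e).1 + a (val e).2.

Lemma wt_sym d i j : wt d i j = wt d j i.
Proof.
rewrite /wt; case: ltngtP => // h.
by have -> : i = j by apply: val_inj.
Qed.

Lemma wt_edge d (e : edge n) : wt d (val e).1 (val e).2 = d e.
Proof.
case: e => [[x y] h] /=; rewrite /wt /= h insubT /=.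
by congr (d _); apply: val_inj.
Qed.

Lemma wt_pot d a i j : pot d a -> i != j -> wt d i j = a i + a j.
Proof.
move=> P ij; wlog h : i j ij / (i < j)%N.
  move=> W; case: (ltngtP i j) => h; first exact: W.
    by rewrite wt_sym W 1?addrC // eq_sym.
  by case/eqP: ij; apply: val_inj.
have h' : ((i, j).1 < (i, j).2)%N by [].
have := wt_edge d (exist _ (i, j) h'); rewrite /= => ->.
exact: P.
Qed.

Lemma sum_Bvec (a : 'I_n -> R) (e : edge n) :
  (\sum_j a j *: Bvec R j) e = a (val e).1 + a (val e).2.
Proof.
rewrite sum_ffunE.
have ne : (val e).1 != (val e).2 by case: e => [[x y] /= h]; rewrite neq_ltn h.
rewrite (bigD1 (val e).1) //= (bigD1 (val e).2) //=; last by rewrite eq_sym.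
rewrite big1 ?addr0; last first.
  move=> j /andP[j2 j1]; rewrite !ffunE.
  by rewrite eq_sym (negbTE j2) eq_sym (negbTE j1) /= scaler0.
rewrite !ffunE; case: e ne => [[x y] h] /= ne; rewrite !eqxx orbT /=; by rewrite /GRing.scale /= !mulr1.
Qed.


Lemma zip_neq (T : eqType) (l : seq T) y z : uniq (y :: l) -> z \notin l ->
  (l = [::] -> y != z) -> all (fun p => p.1 != p.2) (zip (y :: l) (rcons l z)).
Proof.
elim: l y => [|w l IH] y; first by move=> _ _ /(_ erefl); rewrite /= andbT.
move=> U zN _; move: U; rewrite /= !inE negb_or => /andP[/andP[yw _] /andP[wN Ul]].
move: zN; rewrite inE negb_or => /andP[zw zl].
rewrite yw /=; apply: IH => //=; first by rewrite wN.
by move=> l0; rewrite eq_sym.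
Qed.

Lemma pot_cpi d a : pot d a -> closed_path_independent d.
Proof.
move=> P D D3.
suff key : forall s, closed_path_through D s -> cpath_len d s = 2%:R * \sum_(x in D) a x.
  by move=> s t /key -> /key ->.
move=> s [Us sD].
have szs : size s = #|D| by rewrite -(card_uniqP Us); apply: eq_card.
case: s Us sD szs => [|x s'] Us sD szs; first by rewrite -szs in D3.
have xs' : x \notin s' by move: Us => /andP[].
have s'0 : s' = [::] -> x != x.
  by move=> e; rewrite e in szs; rewrite -szs in D3.
have Hall := zip_neq Us xs' s'0.
rewrite /cpath_len rot1_cons.
rewrite (eq_big_seq (fun p => a p.1 + a p.2)); last first.
  by move=> p pin; apply: wt_pot => //; apply: (allP Hall p pin).
rewrite big_split /= -(big_map fst predT a) -(big_map snd predT a).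
rewrite -/(unzip1 _) -/(unzip2 _) unzip1_zip ?unzip2_zip ?size_rcons //.
have -> : \sum_(i <- rcons s' x | predT i) a i = \sum_(i <- x :: s' | predT i) a i.
  by apply: perm_big; rewrite perm_rcons.
have pe : perm_eq (x :: s') (enum D).
  by apply: uniq_perm => //; [exact: enum_uniq | move=> y; rewrite mem_enum sD].
by rewrite (perm_big _ pe) big_enum mulr_natl mulr2n.
Qed.


Lemma ex3 (hn : (3 <= n)%N) i j : exists k, (k != i) && (k != j).
Proof.
have : (0 < #|~: [set i; j]|)%N.
  have := cardsC [set i; j]; rewrite cards2 card_ord.
  by case: (i != j) => /= ?; lia.
by case/card_gt0P => k; rewrite !inE negb_or => ?; exists k.
Qed.

Lemma four_cycle d i j k l : closed_path_independent d ->
  i != j -> i != k -> i != l -> j != k -> j != l -> k != l ->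
  wt d i k + wt d l j = wt d i l + wt d k j.
Proof.
move=> C ij ik il jk jl kl.
pose D := [set x in [:: i; k; l; j]].
have [ji ki li] : [/\ j != i, k != i & l != i] by split; rewrite eq_sym.
have [kj lj lk] : [/\ k != j, l != j & l != k] by split; rewrite eq_sym.
have U1 : uniq [:: i; k; l; j].
  by rewrite /= !inE !negb_or ik il ij kl kj lj.
have U2 : uniq [:: i; l; k; j].
  by rewrite /= !inE !negb_or ik il ij lk kj lj.
have D3 : (3 <= #|D|)%N by rewrite cardsE (card_uniqP U1).
have := C D D3 [:: i; k; l; j] [:: i; l; k; j].
rewrite /cpath_len /= !big_cons big_nil.
rewrite (wt_sym d l k) !addr0 => H.
have E1 : [:: i; k; l; j] =i D by move=> x; rewrite !inE.
have E2 : [:: i; l; k; j] =i D.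
  by move=> x; rewrite !inE; case: (x == i); case: (x == k); case: (x == l); case: (x == j).
have {}H := H (conj U1 E1).
have {}H := H (conj U2 E2).
have := wt_sym d j i; have := wt_sym d k i; have := wt_sym d j l; lra.
Qed.


Definition W d i j k := wt d i j + wt d i k - wt d j k.

Lemma Wsym d i j k : W d i j k = W d i k j.
Proof. rewrite /W (wt_sym d j k); lra. Qed.

Lemma Wstep d i j k l : closed_path_independent d ->
  i != j -> i != k -> j != k -> i != l -> j != l -> W d i j k = W d i j l.
Proof.
move=> C ij ik jk il jl; have [/eqP -> //|kl] := boolP (k == l).
have := four_cycle C ij ik il jk jl kl.
rewrite /W (wt_sym d l j) (wt_sym d k j); lra.
Qed.

Lemma Wall d i j k p q : closed_path_independent d ->
  i != j -> i != k -> j != k -> i != p -> i != q -> p != q ->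
  W d i j k = W d i p q.
Proof.
move=> C ij ik jk ip iq pq.
have [/eqP eqj|qj] := boolP (q == j).
  rewrite eqj in pq *; rewrite [RHS]Wsym; apply: Wstep => //; by rewrite eq_sym.
rewrite (Wstep C ij ik jk iq (_ : j != q)); last by rewrite eq_sym.
rewrite Wsym (Wstep C iq ij (_ : q != j) ip (_ : q != p)) //; last by rewrite eq_sym.
by rewrite Wsym.
Qed.

Definition apot d (i : 'I_n) : R :=
  if [pick p : 'I_n * 'I_n | [&& p.1 != i, p.2 != i & p.2 != p.1]] is Some p
  then W d i p.1 p.2 / 2%:R else 0.

Lemma apot_spec d i j k : (3 <= n)%N -> closed_path_independent d ->
  i != j -> i != k -> j != k -> apot d i = W d i j k / 2%:R.
Proof.
move=> hn C ij ik jk; rewrite /apot; case: pickP => [p /and3P[p1 p2 p21]|H].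
  by rewrite (Wall C (_ : i != p.1) (_ : i != p.2) (_ : p.1 != p.2) ij ik jk) // eq_sym.
have [k' /andP[k1 k2]] := ex3 hn i j.
have := H (j, k'); rewrite /= k1 k2 /= eq_sym ij //.
Qed.

Lemma cpi_pot d : (3 <= n)%N -> closed_path_independent d -> pot d (apot d).
Proof.
move=> hn C e; case: e => [[i j] h] /=.
have ij : i != j by rewrite neq_ltn h.
have [k /andP[ki kj]] := ex3 hn i j.
rewrite (apot_spec hn C ij (_ : i != k) (_ : j != k)); try by rewrite eq_sym.
rewrite (apot_spec hn C (_ : j != i) (_ : j != k) (_ : i != k)); try by rewrite eq_sym.
have := wt_edge d (exist _ (i, j) h); rewrite /= => <-.
rewrite /W; have := wt_sym d i j; have := wt_sym d i k; have := wt_sym d j k; lra.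
Qed.


Definition Xs := [seq Bvec R j | j <- enum 'I_n].
Definition Tt := map_tuple (@Bvec R n) (ord_tuple n).

Lemma TtE : (Tt : seq _) = Xs.
Proof. by rewrite /Tt /= -val_ord_tuple. Qed.

Lemma Tt_nth (i : 'I_n) : (Tt : seq _)`_i = Bvec R i.
Proof.
rewrite TtE /Xs (nth_map i) ?size_enum_ord //.
by congr (Bvec R _); apply: val_inj; rewrite /= nth_ord_enum.
Qed.

Lemma span_pot d : d \in <<Xs>>%VS <-> exists a, pot d a.
Proof.
split.
  rewrite -TtE => /coord_span E; exists (fun i => coord Tt i d) => e.
  rewrite {1}E (eq_bigr (fun i => coord Tt i d *: Bvec R i)) ?sum_Bvec //.
  by move=> i _; rewrite Tt_nth.
case=> a P.
have -> : d = \sum_j a j *: Bvec R j by apply/ffunP => e; rewrite sum_Bvec P.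
apply: memv_suml => j _; apply: memvZ; apply: memv_span.
by apply: map_f; rewrite mem_enum.
Qed.

Lemma wt0 i j : wt (0 : graphS R n) i j = 0.
Proof. by rewrite /wt; case: insub => // e; rewrite ffunE. Qed.

Lemma free_Xs : (3 <= n)%N -> free Xs.
Proof.
move=> hn; rewrite -TtE; apply/freeP => k.
rewrite (eq_bigr (fun i => k i *: Bvec R i)); last by move=> i _; rewrite Tt_nth.
move=> E0.
have P : pot 0 k by move=> e; rewrite -E0 sum_Bvec.
move=> i; have [j /andP[ji _]] := ex3 hn i i.
have [l /andP[li lj]] := ex3 hn i j.
have := wt_pot P (_ : i != j); have := wt_pot P (_ : i != l).
have := wt_pot P (_ : j != l); rewrite !wt0.
move=> /(_ ltac:(by rewrite eq_sym)) h1 /(_ ltac:(by rewrite eq_sym)) h2.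
move=> /(_ ltac:(by rewrite eq_sym)) h3; lra.
Qed.

End S.

Unset Implicit Arguments.

Theorem theorem9 (R : realType) (n : nat) : (4 <= n)%N ->
  exists U : {vspace graphS R n},
    (forall d : graphS R n, d \in U <-> closed_path_independent d) /\
    \dim U = n /\
    basis_of U [seq Bvec R j | j <- enum 'I_n].
Proof.
move=> h4; have hn : (3 <= n)%N by apply: leq_trans h4.
have fX := @free_Xs R n hn.
exists <<Xs R n>>%VS; split; [|split].
- move=> d; rewrite span_pot; split; first by case=> a; apply: pot_cpi.
  by move=> C; exists (apot d); apply: cpi_pot.
- by move: fX; rewrite /free => /eqP ->; rewrite size_map size_enum_ord.
- by rewrite /basis_of eqxx fX.
Qed.
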